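(* Let $(R,\mathfrak m)$ be a Noetherian local ring and $I,J$ ideals of $R$. Then $\operatorname{ar}_J(I)=d(\operatorname{in}(I))$.
   Context: $\operatorname{gr}_J(R)=\bigoplus_{n\ge0}J^n/J^{n+1}$ (a standard graded ring). For $0\ne f\in R$, $o(f)$ is the largest $n$ with $f\in J^n$ and $f^*$ is the class of $f$ in $J^{o(f)}/J^{o(f)+1}$; $0^*=0$; $\operatorname{in}(I)$ is the ideal of $\operatorname{gr}_J(R)$ generated by all $f^*$, $f\in I$. For a graded ideal $Q$, $d(Q)$ is the maximum degree of the elements of a minimal homogeneous generating set of $Q$. The Artin–Rees number $\operatorname{ar}_J(I)$ is the least $c$ such that $J^n\cap I=J^{n-c}(J^c\cap I)$ for all $n\ge c$. *)

(* Defs.v *)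
(* Commutative rings are [comNzRingType]s; ideals are
   predicates [R -> Prop]; the associated graded ring gr_J(R) is modelled
   degreewise: a homogeneous element of degree n is a pair (n, x) with
   x in J^n, standing for the class of x in J^n/J^(n+1). *)
From mathcomp Require Import all_boot all_order all_algebra.
Set Implicit Arguments. Unset Strict Implicit. Unset Printing Implicit Defensive.
Import GRing.Theory.
Local Open Scope ring_scope.

Section Defs.
Variable R : comNzRingType.
Implicit Types (A B I J M : R -> Prop).

Definition ideal A :=
  [/\ A 0, (forall x y, A x -> A y -> A (x + y)) & (forall r x, A x -> A (r * x))].

Definition seteq A B := forall x, A x <-> B x.
Definition subid A B := forall x, A x -> B x.
Definition isect A B := fun x => A x /\ B x.
Definition whole : R -> Prop := fun _ => True.

Definition prod_id A B : R -> Prop := fun x =>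
  exists (k : nat) (a b : nat -> R),
    (forall i, (i < k)%N -> A (a i) /\ B (b i)) /\ x = \sum_(i < k) a i * b i.

Fixpoint ipow J (n : nat) : R -> Prop :=
  if n is n'.+1 then prod_id J (ipow J n') else whole.

Definition gen_by (s : seq R) : R -> Prop := fun x =>
  exists r : nat -> R, x = \sum_(i < size s) r i * nth 0 s i.

Definition noetherian := forall A, ideal A -> exists s, seteq A (gen_by s).

Definition maximal_ideal M :=
  [/\ ideal M, ~ M 1 &
      forall A, ideal A -> subid M A -> ~ A 1 -> seteq A M].

Definition local_ring :=
  exists M, maximal_ideal M /\ forall M', maximal_ideal M' -> seteq M' M.

Definition ar_cond J I (c : nat) :=
  forall n, (c <= n)%N ->
    seteq (isect (ipow J n) I) (prod_id (ipow J (n - c)) (isect (ipow J c) I)).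
Definition is_ar_number J I (c : nat) :=
  ar_cond J I c /\ forall c', ar_cond J I c' -> (c <= c')%N.

Definition order_is J (f : R) (n : nat) := ipow J n f /\ ~ ipow J n.+1 f.

(* the initial forms f^*, f in I, f <> 0, as homogeneous pairs (o(f), f) *)
Definition init_forms J I : nat * R -> Prop := fun p =>
  I p.2 /\ order_is J p.2 p.1.

Definition homog_set J (G : nat * R -> Prop) := forall p, G p -> ipow J p.1 p.2.

(* degree-n component of the ideal of gr_J(R) generated by G
   (as the set of representatives x in J^n of its classes) *)
Definition gen_comp J (G : nat * R -> Prop) (n : nat) : R -> Prop := fun x =>
  ipow J n x /\
  exists (k : nat) (a : nat -> R) (g : nat -> nat * R),
    (forall i, (i < k)%N ->
       [/\ G (g i), ((g i).1 <= n)%N & ipow J (n - (g i).1) (a i)]) /\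
    ipow J n.+1 (x - \sum_(i < k) a i * (g i).2).

Definition in_comp J I : nat -> R -> Prop := gen_comp J (init_forms J I).

Definition hom_gens J (Q : nat -> R -> Prop) (S : nat * R -> Prop) :=
  [/\ homog_set J S, (forall p, S p -> Q p.1 p.2) &
      (forall n x, Q n x <-> gen_comp J S n x)].

Definition min_hom_gens J Q (S : nat * R -> Prop) :=
  hom_gens J Q S /\
  forall S' : nat * R -> Prop, (forall p, S' p -> S p) ->
    (exists p, S p /\ ~ S' p) -> ~ hom_gens J Q S'.

(* d(Q) = d : the maximum degree of the elements of a minimal homogeneous
   generating set of Q (0 for the empty set) *)
Definition d_is J Q (d : nat) :=
  (exists S, min_hom_gens J Q S) /\
  forall S, min_hom_gens J Q S ->
    (forall p, S p -> (p.1 <= d)%N) /\ (d = 0%N \/ exists p, S p /\ p.1 = d).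

End Defs.

(* Main.v *)
Require Import Defs.
From mathcomp Require Import all_boot all_order all_algebra.
From mathcomp Require Import zify ring.
From Stdlib Require Import Classical IndefiniteDescription.
Set Implicit Arguments. Unset Strict Implicit. Unset Printing Implicit Defensive.
Import GRing.Theory.
Local Open Scope ring_scope.

Lemma sum_closed (V : nmodType) (Q : V -> Prop) k (f : nat -> V) :
  Q 0 -> (forall x y, Q x -> Q y -> Q (x + y)) ->
  (forall i, (i < k)%N -> Q (f i)) -> Q (\sum_(i < k) f i).
Proof.
move=> Q0 QD; elim: k => [|k IH] H; first by rewrite big_ord0.
rewrite big_ord_recr /=; apply: QD; last exact: H.
by apply: IH => i lti; apply: H; apply: ltnW.
Qed.

Lemma sum_concat (V : nmodType) k1 k2 (f1 f2 : nat -> V) :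
  \sum_(i < k1) f1 i + \sum_(i < k2) f2 i =
  \sum_(i < k1 + k2) (if (i < k1)%N then f1 i else f2 (i - k1)%N).
Proof.
rewrite big_split_ord /=; congr (_ + _); apply: eq_bigr => i _ /=.
  by rewrite ltn_ord.
by rewrite ltnNge leq_addr /= addKn.
Qed.

Section Basics.
Variable R : comNzRingType.
Implicit Types (A B C K M : R -> Prop).

Lemma idl0 A : ideal A -> A 0. Proof. by case. Qed.
Lemma idlD A x y : ideal A -> A x -> A y -> A (x + y). Proof. by case=> _ H _; apply: H. Qed.
Lemma idlM A r x : ideal A -> A x -> A (r * x). Proof. by case=> _ _ H; apply: H. Qed.
Lemma idlMr A r x : ideal A -> A x -> A (x * r). Proof. by move=> iA Ax; rewrite mulrC; apply: idlM. Qed.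
Lemma idlN A x : ideal A -> A x -> A (- x).
Proof. by move=> iA Ax; rewrite -mulN1r; apply: idlM. Qed.
Lemma idlB A x y : ideal A -> A x -> A y -> A (x - y).
Proof. by move=> iA Ax Ay; apply: idlD => //; apply: idlN. Qed.
Lemma idl_sum A k (f : nat -> R) : ideal A -> (forall i, (i < k)%N -> A (f i)) ->
  A (\sum_(i < k) f i).
Proof. move=> iA; apply: sum_closed; [exact: idl0|move=> x y; exact: idlD]. Qed.
Lemma idl_whole : ideal (@whole R). Proof. by []. Qed.
Lemma idl_isect A B : ideal A -> ideal B -> ideal (isect A B).
Proof.
move=> iA iB; split; first by split; apply: idl0.
  by move=> x y [? ?] [? ?]; split; apply: idlD.
by move=> r x [? ?]; split; apply: idlM.
Qed.
Lemma idl_ext A B : seteq A B -> ideal A -> ideal B.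
Proof.
move=> e [H0 HD HM]; split; first by apply/e.
  by move=> x y /e ? /e ?; apply/e; apply: HD.
by move=> r x /e ?; apply/e; apply: HM.
Qed.

Lemma prod_id_mul A B a b : A a -> B b -> prod_id A B (a * b).
Proof. move=> Aa Bb; exists 1%N, (fun _ => a), (fun _ => b); split; first by case.
by rewrite big_ord1. Qed.
Lemma prod_id0 A B : prod_id A B 0.
Proof. by exists 0%N, (fun _ => 0), (fun _ => 0); split => //; rewrite big_ord0. Qed.
Lemma prod_idD A B x y : prod_id A B x -> prod_id A B y -> prod_id A B (x + y).
Proof.
move=> [k1 [a1 [b1 [H1 ->]]]] [k2 [a2 [b2 [H2 ->]]]].
exists (k1 + k2)%N, (fun i => if (i < k1)%N then a1 i else a2 (i - k1)%N),
  (fun i => if (i < k1)%N then b1 i else b2 (i - k1)%N); split.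
  move=> i lti; case: ifP => [/H1 //|/negbT]; rewrite -leqNgt => le.
  by apply: H2; lia.
rewrite (@sum_concat _ k1 k2 (fun i => a1 i * b1 i) (fun i => a2 i * b2 i)).
apply: eq_bigr => i _; by case: ifP.
Qed.
Lemma prod_id_lmul A A' B r x : (forall a, A a -> A' (r * a)) ->
  prod_id A B x -> prod_id A' B (r * x).
Proof.
move=> HA [k [a [b [H ->]]]]; exists k, (fun i => r * a i), b; split.
  by move=> i /H [? ?]; split => //; apply: HA.
by rewrite mulr_sumr; apply: eq_bigr => i _; rewrite mulrA.
Qed.
Lemma prod_id_rmul A B B' r x : (forall b, B b -> B' (b * r)) ->
  prod_id A B x -> prod_id A B' (x * r).
Proof.
move=> HB [k [a [b [H ->]]]]; exists k, a, (fun i => b i * r); split.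
  by move=> i /H [? ?]; split => //; apply: HB.
by rewrite mulr_suml; apply: eq_bigr => i _; rewrite mulrA.
Qed.
Lemma prod_id_ideal A B : ideal A -> ideal (prod_id A B).
Proof.
move=> iA; split; [exact: prod_id0|move=> x y; exact: prod_idD|].
by move=> r x; apply: prod_id_lmul => a; apply: idlM.
Qed.
Lemma prod_id_sub A B C : ideal C -> (forall a b, A a -> B b -> C (a * b)) ->
  forall x, prod_id A B x -> C x.
Proof.
move=> iC H x [k [a [b [Hk ->]]]]; apply: (idl_sum (f := fun i => a i * b i)) => // i /Hk [? ?]; exact: H.
Qed.
Lemma prod_id_mono A A' B B' : (forall x, A x -> A' x) -> (forall x, B x -> B' x) ->
  forall x, prod_id A B x -> prod_id A' B' x.
Proof.
move=> HA HB x [k [a [b [Hk ->]]]]; exists k, a, b; split => //.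
by move=> i /Hk [? ?]; split; [apply: HA|apply: HB].
Qed.
Lemma prod_id_whole A : ideal A -> forall x, prod_id (@whole R) A x <-> A x.
Proof.
move=> iA x; split; first by apply: prod_id_sub => // a b _ Ab; apply: idlM.
by move=> Ax; rewrite -[x]mul1r; apply: prod_id_mul.
Qed.

Lemma gen_by_ideal (s : seq R) : ideal (gen_by s).
Proof.
split; first by exists (fun _ => 0); rewrite big1 // => i _; rewrite mul0r.
  move=> x y [r1 ->] [r2 ->]; exists (fun i => r1 i + r2 i).
  by rewrite -big_split; apply: eq_bigr => i _; rewrite mulrDl.
move=> r x [r1 ->]; exists (fun i => r * r1 i).
by rewrite mulr_sumr; apply: eq_bigr => i _; rewrite mulrA.
Qed.
Lemma gen_by_nth (s : seq R) i : (i < size s)%N -> gen_by s (nth 0 s i).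
Proof.
move=> lti; exists (fun j => (j == i)%:R).
rewrite (bigD1 (Ordinal lti)) //= eqxx mul1r big1 ?addr0 // => j.
by move/negbTE; rewrite -val_eqE /= => ->; rewrite mul0r.
Qed.
Lemma gen_by_sub (s : seq R) A : ideal A -> (forall i, (i < size s)%N -> A (nth 0 s i)) ->
  forall x, gen_by s x -> A x.
Proof.
move=> iA H x [r ->]; apply: (idl_sum (f := fun i => r i * nth 0 s i)) => // i lti; apply: idlM => //; exact: H.
Qed.

Variable J : R -> Prop.
Hypothesis iJ : ideal J.

Lemma ipow_ideal n : ideal (ipow J n).
Proof. by case: n => [|n] //=; apply: prod_id_ideal. Qed.

Lemma ipow_mul m n x y : ipow J m x -> ipow J n y -> ipow J (m + n) (x * y).
Proof.
elim: m x => [|m IH] x /=; first by move=> _ Hy; rewrite add0n; apply: idlM => //; exact: ipow_ideal.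
move=> Hx Hy; rewrite ?addSn /=.
move: Hx; apply: prod_id_rmul => b Hb; exact: IH.
Qed.

Lemma ipow_split m n x : ipow J (m + n) x -> prod_id (ipow J m) (ipow J n) x.
Proof.
elim: m x => [|m IH] x /=.
  by rewrite add0n => Hx; rewrite -[x]mul1r; apply: prod_id_mul.
move: x; apply: prod_id_sub; first exact: prod_id_ideal (prod_id_ideal _ iJ).
move=> a b Ja /IH Hb; apply: prod_id_lmul Hb => u Hu.
exact: prod_id_mul.
Qed.

Lemma ipow_anti m n x : (n <= m)%N -> ipow J m x -> ipow J n x.
Proof.
move=> le; rewrite -(subnKC le) => /ipow_split; apply: prod_id_sub; first exact: ipow_ideal.
move=> a b Ha _; apply: idlMr => //; exact: ipow_ideal.
Qed.

Lemma ipow1 n : J 1 -> ipow J n 1.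
Proof.
move=> J1; elim: n => [|n IH] //=; rewrite -[1]mulr1; exact: prod_id_mul.
Qed.
Lemma ipow_all n x : J 1 -> ipow J n x.
Proof. move=> J1; rewrite -[x]mulr1; apply: idlM; [exact: ipow_ideal|exact: ipow1]. Qed.

Variable I : R -> Prop.
Hypothesis iI : ideal I.

Definition KK n d := prod_id (ipow J (n - d)) (isect (ipow J d) I).

Lemma KK_ideal n d : ideal (KK n d).
Proof. exact: prod_id_ideal (ipow_ideal _). Qed.

Lemma KK_sub n d x : (d <= n)%N -> KK n d x -> isect (ipow J n) I x.
Proof.
move=> le; apply: prod_id_sub; first exact: idl_isect (ipow_ideal _) iI.
move=> a b Ha [Hb Ib]; split; last by apply: idlM.
by rewrite -(subnK le); apply: ipow_mul.
Qed.

Lemma KK_gen n d e a g : (e <= d)%N -> (d <= n)%N -> ipow J (n - e) a ->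
  ipow J e g -> I g -> KK n d (a * g).
Proof.
move=> le1 le2 Ha Hg Ig.
have : ipow J ((n - d) + (d - e)) a by rewrite addnBA // subnK.
move/ipow_split; apply: prod_id_rmul => b Hb; split; last by apply: idlM.
by rewrite -(subnK le1); apply: ipow_mul.
Qed.

Lemma KK_mono n d x : (d <= n)%N -> KK n.+1 d x -> KK n d x.
Proof.
move=> le; apply: prod_id_mono => // y; apply: ipow_anti; lia.
Qed.

Lemma ar_cond_mono c c' : (c <= c')%N -> ar_cond J I c -> ar_cond J I c'.
Proof.
move=> le H n len; split => Hx.
  have : KK n c x by apply/H => //; apply: leq_trans len.
  have e : (n - c = (n - c') + (c' - c))%N by lia.
  rewrite /KK e; apply: prod_id_sub; first exact: prod_id_ideal (ipow_ideal _).
  move=> a b /ipow_split Ha [Hb Ib]; move: Ha; apply: prod_id_rmul => y Hy.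
  split; last by apply: idlM.
  by rewrite -(subnK le); apply: ipow_mul.
by apply: (KK_sub len).
Qed.

End Basics.

Lemma gen_by_mem (R : comNzRingType) (s : seq R) x : x \in s -> gen_by s x.
Proof. by move=> xs; rewrite -(nth_index 0 xs); apply: gen_by_nth; rewrite index_mem. Qed.

Section Local.
Variable R : comNzRingType.
Implicit Types (A B C J K M : R -> Prop).

Lemma max_exists : noetherian R -> forall A, ideal A -> ~ A 1 ->
  exists M, maximal_ideal M /\ subid A M.
Proof.
move=> noeR A iA nA1; apply: NNPP => Hno.
have step : forall B, exists C, (ideal B /\ ~ B 1 /\ subid A B) ->
    (ideal C /\ ~ C 1 /\ subid B C /\ exists x, C x /\ ~ B x).
  move=> B; case: (classic (ideal B /\ ~ B 1 /\ subid A B)) => [[iB [nB sAB]]|nH];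
    last by exists B.
  have nmB : ~ maximal_ideal B by move=> mB; apply: Hno; exists B.
  apply: NNPP => Hc; apply: nmB; split => // C iC sBC nC1 x; split; last exact: sBC.
  move=> Cx; apply: NNPP => nBx; apply: Hc; exists C => _.
  by split => //; split => //; split => //; exists x.
have [f Hf] := functional_choice _ step.
pose B k := iter k f A.
have HB : forall k, ideal (B k) /\ ~ B k 1 /\ subid A (B k).
  elim=> [|k [iB [nB sAB]]] /=; first by split => //; split => // x.
  have [iC [nC [sBC _]]] := Hf _ (conj iB (conj nB sAB)).
  by split => //; split => // x /sAB /sBC.
have Hinc : forall k x, B k x -> B k.+1 x.
  by move=> k x; have [_ [_ [sBC _]]] := Hf _ (HB k); apply: sBC.
have Hmono : forall k l x, (k <= l)%N -> B k x -> B l x.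
  move=> k l x; elim: l => [|l IH]; first by rewrite leqn0 => /eqP ->.
  rewrite leq_eqVlt => /orP [/eqP -> //|lt] Bx; apply: Hinc; exact: IH.
pose U x := exists k, B k x.
have iU : ideal U.
  split; first by exists 0%N; apply: idl0 (HB 0%N).1.
    move=> x y [k Bx] [l By]; exists (maxn k l); apply: idlD (HB _).1 _ _.
      by apply: Hmono Bx; apply: leq_maxl.
    by apply: Hmono By; apply: leq_maxr.
  by move=> r x [k Bx]; exists k; apply: idlM (HB _).1 _.
have [s Hs] := noeR U iU.
have [N0 HK] : exists N0, forall i, (i < size s)%N -> B N0 (nth 0 s i).
  have : forall i, (i < size s)%N -> U (nth 0 s i) by move=> i /gen_by_nth /Hs.
  elim: s {Hs} => [|a t IH] Hin; first by exists 0%N.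
  have [N1 HK] := IH (fun i lti => Hin i.+1 lti).
  have [k Ba] := Hin 0%N isT.
  exists (maxn k N1) => -[|i] /= lti; first by apply: Hmono Ba; apply: leq_maxl.
  by apply: Hmono (HK i lti); apply: leq_maxr.
have sUB : forall x, U x -> B N0 x.
  by move=> x /Hs; apply: gen_by_sub => //; exact: (HB N0).1.
have [_ [_ [_ [x [Bx nBx]]]]] := Hf (B N0) (HB N0).
by apply: nBx; apply: sUB; exists N0.+1.
Qed.

Lemma local_unit : noetherian R -> local_ring R -> forall J, ideal J -> ~ J 1 ->
  forall j, J j -> exists v, v * (1 - j) = 1.
Proof.
move=> noeR [M [mM uM]] J iJ nJ1 j Jj.
pose A x := exists r, x = r * (1 - j).
have iA : ideal A.
  split; first by exists 0; rewrite mul0r.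
    by move=> x y [r1 ->] [r2 ->]; exists (r1 + r2); rewrite mulrDl.
  by move=> r x [r1 ->]; exists (r * r1); rewrite mulrA.
case: (classic (A 1)) => [[r e]|nA1]; first by exists r.
exfalso.
have [M1 [mM1 sA]] := max_exists noeR iA nA1.
have [M2 [mM2 sJ]] := max_exists noeR iJ nJ1.
have e1 := uM _ mM1; have e2 := uM _ mM2.
case: mM => iM nM1 _; apply: nM1.
have h1 : M (1 - j) by apply/e1; apply: sA; exists 1; rewrite mul1r.
have h2 : M j by apply/e2; apply: sJ.
by have := idlD iM h1 h2; rewrite subrK.
Qed.

Lemma nakayama : noetherian R -> local_ring R -> forall J M K, ideal J -> ~ J 1 ->
  ideal M -> ideal K ->
  (forall x, M x -> exists k z, K k /\ prod_id J M z /\ x = k + z) ->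
  forall x, M x -> K x.
Proof.
move=> noeR loc J M K iJ nJ1 iM iK HM.
have [s Hs] := noeR M iM.
suff main : forall t : seq R, (forall i, (i < size t)%N -> M (nth 0 t i)) ->
   (forall x, M x -> exists k y, K k /\ gen_by t y /\ x = k + y) ->
   forall x, M x -> K x.
  apply: (main s); first by move=> i /gen_by_nth /Hs.
  move=> x /Hs Hx; exists 0, x; split; first exact: idl0.
  by split => //; rewrite add0r.
elim=> [|a t IH] Hin Hsp x Mx.
  have [k [y [Kk [[r ->] ->]]]] := Hsp x Mx.
  by rewrite big_ord0 addr0.
pose Q z := exists k' (r : nat -> R), K k' /\ (forall i, J (r i)) /\
   z = k' + \sum_(i < size (a :: t)) r i * nth 0 (a :: t) i.
have iQ : ideal Q.
  split.
  - exists 0, (fun _ => 0); split; first exact: idl0.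
    split; first by move=> _; apply: idl0.
    by rewrite big1 ?addr0 // => i _; rewrite mul0r.
  - move=> x1 y1 [k1 [r1 [K1 [J1 ->]]]] [k2 [r2 [K2 [J2 ->]]]].
    exists (k1 + k2), (fun i => r1 i + r2 i); split; first exact: idlD.
    split; first by move=> i; apply: idlD.
    rewrite addrACA; congr (_ + _); rewrite -big_split.
    by apply: eq_bigr => i _; rewrite mulrDl.
  - move=> r x1 [k1 [r1 [K1 [J1 ->]]]]; exists (r * k1), (fun i => r * r1 i).
    split; first exact: idlM.
    split; first by move=> i; apply: idlM.
    by rewrite mulrDr mulr_sumr; congr (_ + _); apply: eq_bigr => i _; rewrite mulrA.
have QJM : forall z, prod_id J M z -> Q z.
  apply: (prod_id_sub iQ) => u m Ju Mm.
  have [k1 [y1 [K1 [[r1 ->] ->]]]] := Hsp m Mm.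
  exists (u * k1), (fun i => u * r1 i); split; first exact: idlM.
  split; first by move=> i; exact: idlMr iJ Ju.
  by rewrite mulrDr mulr_sumr; congr (_ + _); apply: eq_bigr => i _; rewrite mulrA.
have key : exists k y, K k /\ gen_by t y /\ a = k + y.
  have Ma : M a := Hin 0%N isT.
  have [k [z [Kk [Jz ea]]]] := HM a Ma.
  have [k' [r [Kk' [Jr ez]]]] := QJM z Jz.
  move: ez; rewrite big_ord_recl /= => ez.
  have [v ev] := local_unit noeR loc iJ nJ1 (Jr 0%N).
  pose S := \sum_(i < size t) r (bump 0 i) * nth 0 t i.
  have e1 : (1 - r 0%N) * a = (k + k') + S.
    rewrite mulrBl mul1r {1}ea ez /S; ring.
  exists (v * (k + k')), (v * S); split; first by apply: idlM => //; exact: idlD iK Kk Kk'.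
  split.
    exists (fun i => v * r (bump 0 i)); rewrite /S mulr_sumr.
    by apply: eq_bigr => i _; rewrite mulrA.
  by rewrite -mulrDr -e1 mulrA ev mul1r.
have [ka [ya [Kka [Gya ea]]]] := key.
apply: IH.
- by move=> i lti; apply: (Hin i.+1).
- move=> y My; have [k [w [Kk [[r ->] ->]]]] := Hsp y My.
  rewrite big_ord_recl /= ea.
  exists (k + r 0%N * ka), (r 0%N * ya + \sum_(i < size t) r (bump 0 i) * nth 0 t i).
  split; first by apply: idlD => //; apply: idlM.
  split; last by ring.
  apply: idlD; first exact: gen_by_ideal.
    by apply: idlM => //; exact: gen_by_ideal.
  by exists (fun i => r (bump 0 i)).
- exact: Mx.
Qed.

End Local.

Section Hilbert.
Variable A : comNzRingType.
Hypothesis noeA : noetherian A.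
Variable N : {poly A} -> Prop.
Hypothesis iN : ideal N.

Definition Lc d (c : A) := exists p, N p /\ (size p <= d.+1)%N /\ p`_d = c.

Lemma size_polyB_le (p q : {poly A}) n : (size p <= n)%N -> (size q <= n)%N -> (size (p - q)%R <= n)%N.
Proof.
move=> hp hq; apply: leq_trans (size_polyD _ _) _; rewrite size_polyN.
by rewrite geq_max hp hq.
Qed.
Lemma size_polyD_le (p q : {poly A}) n : (size p <= n)%N -> (size q <= n)%N -> (size (p + q)%R <= n)%N.
Proof. by move=> hp hq; apply: leq_trans (size_polyD _ _) _; rewrite geq_max hp hq. Qed.

Lemma Lc_ideal d : ideal (Lc d).
Proof.
split.
- by exists 0; split; [exact: idl0|rewrite size_poly0 coef0].
- move=> x y [p [Np [sp <-]]] [q [Nq [sq <-]]]; exists (p + q); split; first exact: idlD.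
  by rewrite coefD; split => //; apply: size_polyD_le.
- move=> r x [p [Np [sp <-]]]; exists (r%:P * p); split; first exact: idlM.
  rewrite mul_polyC coefZ; split => //; exact: leq_trans (size_scale_leq _ _) sp.
Qed.

Lemma Lc_succ d c : Lc d c -> Lc d.+1 c.
Proof.
move=> [p [Np [sp <-]]]; exists (p * 'X); split; first exact: idlMr.
rewrite coefMX /=; split => //.
apply: leq_trans (size_polyMleq _ _) _; rewrite size_polyX; lia.
Qed.

Lemma Lc_mono d d' c : (d <= d')%N -> Lc d c -> Lc d' c.
Proof.
move=> le Ld; elim: d' le => [|d' IH]; first by rewrite leqn0 => /eqP <-.
rewrite leq_eqVlt => /orP [/eqP <- //|lt]; apply: Lc_succ; exact: IH.
Qed.

Lemma size_le_coef (q : {poly A}) n : (size q <= n.+1)%N -> q`_n = 0 -> (size q <= n)%N.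
Proof.
move=> h1 h2; apply/leq_sizeP => j; rewrite leq_eqVlt => /orP [/eqP <- //|lt].
exact: (leq_sizeP _ _ h1).
Qed.

Lemma hilbert_fg : exists s : seq {poly A}, seteq N (gen_by s).
Proof.
pose U c := exists d, Lc d c.
have iU : ideal U.
  split; first by exists 0%N; apply: idl0 (Lc_ideal 0).
    move=> x y [k Bx] [l By]; exists (maxn k l); apply: idlD (Lc_ideal _) _ _.
      by apply: Lc_mono Bx; apply: leq_maxl.
    by apply: Lc_mono By; apply: leq_maxr.
  by move=> r x [k Bx]; exists k; apply: idlM (Lc_ideal _) _.
have [s Hs] := noeA iU.
have [D HD] : exists D, forall i, (i < size s)%N -> Lc D (nth 0 s i).
  have : forall i, (i < size s)%N -> U (nth 0 s i) by move=> i /gen_by_nth /Hs.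
  elim: s {Hs} => [|a t IH] Hin; first by exists 0%N.
  have [N1 HK] := IH (fun i lti => Hin i.+1 lti).
  have [k Ba] := Hin 0%N isT.
  exists (maxn k N1) => -[|i] /= lti; first by apply: Lc_mono Ba; apply: leq_maxl.
  by apply: Lc_mono (HK i lti); apply: leq_maxr.
have LD : forall d c, Lc d c -> Lc D c.
  move=> d c Ldc; have : U c by exists d.
  by move/Hs; apply: (gen_by_sub (Lc_ideal D)).
have [t Ht] : exists t : nat -> seq A, forall d, seteq (Lc d) (gen_by (t d)).
  apply: (functional_choice (fun d t => seteq (Lc d) (gen_by t))) => d.
  by apply: noeA; apply: Lc_ideal.
have [w Hw] : exists w : nat -> nat -> {poly A}, forall d i, (i < size (t d))%N ->
    N (w d i) /\ (size (w d i) <= d.+1)%N /\ (w d i)`_d = nth 0 (t d) i.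
  apply: (functional_choice (fun d (f : nat -> {poly A}) => forall i, (i < size (t d))%N ->
    N (f i) /\ (size (f i) <= d.+1)%N /\ (f i)`_d = nth 0 (t d) i)) => d.
  apply: (functional_choice (fun i (p : {poly A}) => (i < size (t d))%N ->
    N p /\ (size p <= d.+1)%N /\ p`_d = nth 0 (t d) i)) => i.
  case: (ltnP i (size (t d))) => [lti|gei]; last by exists 0.
  have : Lc d (nth 0 (t d) i) by apply/Ht; apply: gen_by_nth.
  by move=> [p Hp]; exists p.
pose gs := flatten [seq [seq w d i | i <- iota 0 (size (t d))] | d <- iota 0 D.+1].
have gs_in : forall d i, (d <= D)%N -> (i < size (t d))%N -> gen_by gs (w d i).
  move=> d i leD lti; apply: gen_by_mem; apply/flattenP.
  exists [seq w d i | i <- iota 0 (size (t d))]; last by apply: map_f; rewrite mem_iota.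
  by apply: (map_f (fun d => [seq w d i | i <- iota 0 (size (t d))])); rewrite mem_iota.
have gs_N : forall x, gen_by gs x -> N x.
  apply: gen_by_sub => // i lti; have := mem_nth 0 lti.
  move/flattenP => [l /mapP [d _ ->] /mapP [j]]; rewrite mem_iota => /andP [_ ltj] ->.
  by case: (Hw d j ltj).
exists gs => p; split; last exact: gs_N.
suff main : forall n (p : {poly A}), (size p <= n)%N -> N p -> gen_by gs p by apply: main.
elim=> [|n IH] {}p sp Np.
  move: sp; rewrite leqn0 size_poly_eq0 => /eqP ->; exact: idl0 (gen_by_ideal _).
case: (leqP (size p) n) => [le|gt]; first exact: IH.
pose D' := minn n D; pose k := (n - D')%N.
have leD'n : (D' <= n)%N by apply: geq_minl.
have leD'D : (D' <= D)%N by apply: geq_minr.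
have LD' : Lc D' p`_n.
  have Lp : Lc n p`_n by exists p.
  rewrite /D'; case: (leqP n D) => [le|lt] //.
  by apply: LD Lp.
have [r er] : gen_by (t D') p`_n by apply/Ht.
pose q := p - \sum_(i < size (t D')) (r i)%:P * (w D' i * 'X^k).
have wsz : forall i, (i < size (t D'))%N -> (size ((r i)%:P * (w D' i * 'X^k))%R <= n.+1)%N.
  move=> i /Hw [_ [sw _]]; rewrite mul_polyC; apply: leq_trans (size_scale_leq _ _) _.
  apply: leq_trans (size_polyMleq _ _) _; rewrite size_polyXn /k; lia.
have Nq : N q.
  apply: idlB => //; apply: (idl_sum (f := fun i => (r i)%:P * (w D' i * 'X^k))) => // i lti; apply: idlM => //; apply: idlMr => //.
  by case: (Hw D' i lti).
have sq : (size q <= n.+1)%N.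
  apply: size_polyB_le => //.
  apply: (sum_closed (Q := fun x : {poly A} => (size x <= n.+1)%N) (f := fun i => (r i)%:P * (w D' i * 'X^k))) => //; first by rewrite size_poly0.
  by move=> x y; apply: size_polyD_le.
have cq : q`_n = 0.
  rewrite /q coefB coef_sum er; apply/eqP; rewrite subr_eq0; apply/eqP.
  apply: eq_bigr => i _; rewrite mul_polyC coefZ coefMXn.
  have -> : (n < k)%N = false by rewrite /k; lia.
  have -> : (n - k = D')%N by rewrite /k; lia.
  by case: (Hw D' i (ltn_ord i)) => _ [_ ->].
have Gq : gen_by gs q by apply: IH => //; exact: size_le_coef.
have -> : p = q + \sum_(i < size (t D')) (r i)%:P * (w D' i * 'X^k) by rewrite /q subrK.
apply: idlD (gen_by_ideal _) Gq _; apply: (idl_sum (f := fun i => (r i)%:P * (w D' i * 'X^k))) (gen_by_ideal _) _ => i lti.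
apply: idlM (gen_by_ideal _) _; apply: idlMr (gen_by_ideal _) _; exact: gs_in.
Qed.

End Hilbert.

Lemma hilbert (A : comNzRingType) : noetherian A -> noetherian {poly A}.
Proof. by move=> noeA N iN; apply: hilbert_fg. Qed.

Section Rees.
Variable R : comNzRingType.

Fixpoint Pr (r : nat) : comNzRingType := if r is r'.+1 then {poly Pr r'} else R.

Lemma noeth_Pr r : noetherian R -> noetherian (Pr r).
Proof. by move=> noe; elim: r => [|r IH] //=; exact: hilbert. Qed.

Fixpoint phi (s : seq R) : {rmorphism Pr (size s) -> {poly R}} :=
  match s return {rmorphism Pr (size s) -> {poly R}} with
  | [::] => GRing.RMorphism.clone _ _ (@polyC R) _
  | a :: s' => GRing.RMorphism.clone _ _ (horner_eval (a *: 'X) \o map_poly (phi s'))%FUN _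
  end.

Lemma phi_nil (F : Pr 0) : phi [::] F = F%:P. Proof. by []. Qed.
Lemma phi_cons a s (F : Pr (size (a :: s))) :
  phi (a :: s) F = (map_poly (phi s) F).[a *: 'X].
Proof. by []. Qed.

Variables J I : R -> Prop.
Hypothesis iJ : ideal J.
Hypothesis iI : ideal I.

Definition rees (q : {poly R}) := forall k, ipow J k q`_k.

Lemma rees0 : rees 0.
Proof. by move=> k; rewrite coef0; apply: idl0 (ipow_ideal iJ k). Qed.
Lemma reesD p q : rees p -> rees q -> rees (p + q).
Proof. by move=> hp hq k; rewrite coefD; apply: idlD (ipow_ideal iJ k) _ _. Qed.
Lemma reesM p q : rees p -> rees q -> rees (p * q).
Proof.
move=> hp hq k; rewrite coefM.
apply: (idl_sum (f := fun j : nat => p`_j * q`_(k - j))) (ipow_ideal iJ k) _ => j ltj.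
have -> : k = (j + (k - j))%N by lia.
by apply: ipow_mul => //; rewrite ?addKn.
Qed.
Lemma reesC c : rees c%:P.
Proof. by move=> [|k]; rewrite coefC //=; apply: prod_id0. Qed.
Lemma reesX a : J a -> rees (a *: 'X).
Proof.
move=> Ja [|[|k]]; rewrite coefZ coefX /= ?mulr0 //; try exact: prod_id0.
by rewrite mulr1 -[a]mulr1; apply: prod_id_mul.
Qed.
Lemma reesXn x i : rees x -> rees (x ^+ i).
Proof. by move=> hx; elim: i => [|i IH]; [rewrite expr0; exact: reesC|rewrite exprS; exact: reesM]. Qed.

Lemma rees_phi s : (forall i, (i < size s)%N -> J (nth 0 s i)) -> forall F, rees (phi s F).
Proof.
elim: s => [|a s IH] Hs F; first by rewrite phi_nil; apply: reesC.
rewrite phi_cons horner_coef.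
apply: (sum_closed (Q := rees) (f := fun i => (map_poly (phi s) F)`_i * (a *: 'X) ^+ i)).
- exact: rees0.
- exact: reesD.
- move=> i _; apply: reesM; last by apply: reesXn; apply: reesX; exact: (Hs 0%N).
  by rewrite coef_map; apply: IH => j ltj; apply: (Hs j.+1).
Qed.

Lemma phi_C s c : exists F, phi s F = c%:P.
Proof.
elim: s => [|a s [F eF]]; first by exists c.
by exists (F%:P : Pr (size (a :: s))); rewrite phi_cons map_polyC hornerC.
Qed.

Lemma phi_X s j : (j < size s)%N -> exists F, phi s F = (nth 0 s j) *: 'X.
Proof.
elim: s j => [|a s IH] [|j] // lt.
  by exists ('X : Pr (size (a :: s))); rewrite phi_cons map_polyX hornerX.
have [F eF] := IH j lt.
by exists (F%:P : Pr (size (a :: s))); rewrite phi_cons map_polyC hornerC.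
Qed.

Lemma phi_surj s : seteq J (gen_by s) -> forall n f, ipow J n f ->
  exists F, phi s F = f *: 'X^n.
Proof.
move=> Hs.
pose T n f := exists F, phi s F = f *: 'X^n.
have iT : forall n, ideal (T n).
  move=> n; split.
  - by exists 0; rewrite rmorph0 scale0r.
  - by move=> x y [F1 e1] [F2 e2]; exists (F1 + F2); rewrite rmorphD e1 e2 scalerDl.
  - move=> r x [F1 e1]; have [C eC] := phi_C s r.
    by exists (C * F1); rewrite rmorphM eC e1 mul_polyC scalerA.
have T1 : forall u, J u -> T 1%N u.
  move=> u /Hs; apply: (gen_by_sub (iT 1%N)) => j ltj.
  by have [F eF] := phi_X ltj; exists F; rewrite eF expr1.
elim=> [|n IH] f /=.
  by move=> _; have [F eF] := phi_C s f; exists F; rewrite eF expr0 alg_polyC.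
apply: (prod_id_sub (iT n.+1)) => u v Ju Jv.
have [F1 e1] := T1 u Ju; have [F2 e2] := IH v Jv.
exists (F1 * F2); rewrite rmorphM e1 e2 -!mul_polyC polyCM expr1 exprS; ring.
Qed.

Lemma artin_rees : noetherian R -> exists c, ar_cond J I c.
Proof.
move=> noe; have [s Hs] := noe J iJ.
have sJ : forall i, (i < size s)%N -> J (nth 0 s i) by move=> i /gen_by_nth /Hs.
pose N := fun F : Pr (size s) => forall k, I ((phi s F)`_k).
have iN : ideal N.
  split.
  - by move=> k; rewrite rmorph0 coef0; apply: idl0.
  - by move=> x y Nx Ny k; rewrite rmorphD coefD; apply: idlD.
  - move=> r x Nx k; rewrite rmorphM coefM.
    apply: (idl_sum (f := fun j : nat => (phi s r)`_j * (phi s x)`_(k - j))) => // j _.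
    exact: idlM.
have [gs Hgs] := @noeth_Pr (size s) noe N iN.
pose D := \max_(g <- gs) size (phi s g).
exists D => n leDn f; split.
- move=> [Jf If]; have [F eF] := phi_surj Hs Jf.
  have NF : N F.
    move=> k; rewrite eF coefZ coefXn; case: eqP => _; rewrite ?mulr1 ?mulr0 //.
    exact: idl0.
  have [h eh] := (Hgs F).1 NF.
  have -> : f = (phi s F)`_n by rewrite eF coefZ coefXn eqxx mulr1.
  rewrite eh rmorph_sum coef_sum.
  apply: (idl_sum (f := fun i : nat => (phi s (h i * nth 0 gs i))`_n)) (KK_ideal iJ I n D) _ => i lti.
  rewrite rmorphM coefM.
  apply: (idl_sum (f := fun j : nat => (phi s (h i))`_j * (phi s (nth 0 gs i))`_(n - j)))
    (KK_ideal iJ I n D) _ => j ltj.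
  set g := nth 0 gs i.
  have Ng : N g by apply/Hgs; apply: gen_by_nth.
  case: (leqP (size (phi s g)) (n - j)) => [le|lt].
    by rewrite (leq_sizeP _ _ le) // mulr0; apply: idl0 (KK_ideal iJ I n D).
  have leD : (size (phi s g) <= D)%N.
    by rewrite /D; apply: (@leq_bigmax_seq _ gs xpredT (fun g => size (phi s g))) => //; exact: mem_nth.
  apply: (KK_gen iJ iI (e := (n - j)%N)); first by lia.
  + exact: leDn.
  + by rewrite (_ : (n - (n - j) = j)%N); [apply: (rees_phi sJ) | lia].
  + exact: (rees_phi sJ).
  + exact: Ng.
- exact: KK_sub.
Qed.

End Rees.

Lemma ex_min (P : nat -> Prop) : (exists n, P n) -> exists n, P n /\ forall m, P m -> (n <= m)%N.
Proof.
move=> [n Pn]; apply: NNPP => H.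
suff : forall k m, (m < k)%N -> ~ P m by move/(_ n.+1 n (ltnSn n)).
elim=> [|k IH] m // ltm Pm.
apply: H; exists m; split => // m' Pm'; rewrite leqNgt; apply/negP => lt.
by apply: (IH m') => //; lia.
Qed.

Lemma decide (P : Prop) : {b : bool | b = true <-> P}.
Proof.
apply: constructive_indefinite_description.
case: (classic P) => [p|np]; [exists true|exists false]; split => //.
Qed.

Section Main.
Variable R : comNzRingType.
Variables I J : R -> Prop.
Hypothesis iI : ideal I.
Hypothesis iJ : ideal J.

Notation Q := (in_comp J I).

Definition comb (G : nat * R -> Prop) n x := exists k (a : nat -> R) (g : nat -> nat * R),
  (forall i, (i < k)%N -> [/\ G (g i), ((g i).1 <= n)%N & ipow J (n - (g i).1) (a i)]) /\
  x = \sum_(i < k) a i * (g i).2.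

Lemma gcE G n x : gen_comp J G n x <->
  ipow J n x /\ exists y, comb G n y /\ ipow J n.+1 (x - y).
Proof.
split.
- move=> [Jx [k [a [g [H Hd]]]]]; split => //; exists (\sum_(i < k) a i * (g i).2).
  by split => //; exists k, a, g.
- by move=> [Jx [y [[k [a [g [H ->]]]] Hd]]]; split => //; exists k, a, g.
Qed.

Lemma comb_sum_prop G n (P : R -> Prop) y : P 0 -> (forall u v, P u -> P v -> P (u + v)) ->
  (forall p a, G p -> (p.1 <= n)%N -> ipow J (n - p.1) a -> P (a * p.2)) ->
  comb G n y -> P y.
Proof.
move=> P0 PD Pt [k [a [g [H ->]]]].
apply: (sum_closed (Q := P) (f := fun i => a i * (g i).2)) => // i /H [Gg le Ja]; exact: Pt.
Qed.

Lemma gc_ideal G n : ideal (gen_comp J G n).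
Proof.
split.
- apply/gcE; split; first exact: idl0 (ipow_ideal iJ n).
  exists (0 : R); split; last by rewrite subr0; apply: idl0 (ipow_ideal iJ _).
  by exists 0%N, (fun _ => 0), (fun _ => (0%N, 0)); split => //; rewrite big_ord0.
- move=> x y /gcE [Jx [y1 [[k1 [a1 [g1 [H1 e1]]]] d1]]].
  move=> /gcE [Jy [y2 [[k2 [a2 [g2 [H2 e2]]]] d2]]].
  apply/gcE; split; first exact: idlD (ipow_ideal iJ n) _ _.
  exists (y1 + y2); split.
    exists (k1 + k2)%N, (fun i => if (i < k1)%N then a1 i else a2 (i - k1)%N),
      (fun i => if (i < k1)%N then g1 i else g2 (i - k1)%N); split.
      move=> i lti; case: ifP => [/H1 //|/negbT]; rewrite -leqNgt => le; apply: H2; lia.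
    rewrite e1 e2 (@sum_concat _ k1 k2 (fun i => a1 i * (g1 i).2) (fun i => a2 i * (g2 i).2)).
    by apply: eq_bigr => i _; case: ifP.
  have -> : x + y - (y1 + y2) = (x - y1) + (y - y2) by ring.
  exact: idlD (ipow_ideal iJ _) _ _.
- move=> r x /gcE [Jx [y [[k [a [g [H e]]]] d]]].
  apply/gcE; split; first exact: idlM (ipow_ideal iJ n) _.
  exists (r * y); split.
    exists k, (fun i => r * a i), g; split.
      by move=> i /H [? ? ?]; split => //; apply: idlM (ipow_ideal iJ _) _.
    by rewrite e mulr_sumr; apply: eq_bigr => i _; rewrite mulrA.
  by rewrite -mulrBr; apply: idlM (ipow_ideal iJ _) _.
Qed.

Lemma gc_mulJ G m n b x : ipow J m b -> gen_comp J G n x -> gen_comp J G (m + n) (b * x).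
Proof.
move=> Jb /gcE [Jx [y [[k [a [g [H e]]]] d]]].
apply/gcE; split; first exact: (ipow_mul iJ).
exists (b * y); split.
  exists k, (fun i => b * a i), g; split.
    move=> i /H [Gg le Ja]; split => //; first by apply: leq_trans le (leq_addl _ _).
    by rewrite -addnBA //; apply: (ipow_mul iJ).
  by rewrite e mulr_sumr; apply: eq_bigr => i _; rewrite mulrA.
by rewrite -mulrBr -addnS; apply: (ipow_mul iJ).
Qed.

Lemma gc_fix G n x y : gen_comp J G n y -> ipow J n x -> ipow J n.+1 (x - y) ->
  gen_comp J G n x.
Proof.
move=> /gcE [Jy [z [cz d]]] Jx dxy; apply/gcE; split => //; exists z; split => //.
have -> : x - z = (x - y) + (y - z) by ring.
exact: idlD (ipow_ideal iJ _) _ _.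
Qed.

Lemma gc_mono G G' n x : (forall p, G p -> G' p) -> gen_comp J G n x -> gen_comp J G' n x.
Proof.
move=> sG [Jx [k [a [g [H d]]]]]; split => //; exists k, a, g; split => // i /H [? ? ?].
by split => //; exact: sG.
Qed.

Lemma gc_low G n x : gen_comp J G n x -> gen_comp J (fun p => G p /\ (p.1 <= n)%N) n x.
Proof.
move=> [Jx [k [a [g [H d]]]]]; split => //; exists k, a, g; split => // i /H [? ? ?].
by split.
Qed.

Lemma gc_self G p : G p -> ipow J p.1 p.2 -> gen_comp J G p.1 p.2.
Proof.
move=> Gp Jp; split => //; exists 1%N, (fun _ => 1), (fun _ => p); split.
  by move=> i _; split => //; rewrite subnn.
by rewrite big_ord1 mul1r subrr; apply: idl0 (ipow_ideal iJ _).
Qed.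

Lemma gc_trans G G' n x : (forall p, G p -> gen_comp J G' p.1 p.2) ->
  gen_comp J G n x -> gen_comp J G' n x.
Proof.
move=> HG /gcE [Jx [y [cy d]]]; apply: gc_fix _ Jx d.
move: cy; apply: comb_sum_prop.
- exact: idl0 (gc_ideal _ _).
- by move=> u v; apply: idlD (gc_ideal _ _).
- move=> p a Gp le Ja; rewrite -(subnK le); exact: gc_mulJ (HG p Gp).
Qed.

Lemma Q_char n x : Q n x -> ipow J n x /\ exists y, ipow J n y /\ I y /\ ipow J n.+1 (x - y).
Proof.
move=> /gcE [Jx [y [cy d]]]; split => //; exists y.
suff [] : isect (ipow J n) I y by move=> ? ?; split => //.
move: cy; apply: comb_sum_prop.
- exact: idl0 (idl_isect (ipow_ideal iJ n) iI).
- by move=> u v; apply: idlD (idl_isect (ipow_ideal iJ n) iI).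
- move=> p a [Ip [Jp _]] le Ja; split; last exact: idlM.
  by rewrite -(subnK le); apply: (ipow_mul iJ).
Qed.

Lemma Q_of n y : ipow J n y -> I y -> Q n y.
Proof.
move=> Jy Iy; case: (classic (ipow J n.+1 y)) => [Jy1|nJy1].
  by apply: gc_fix (idl0 (gc_ideal _ n)) Jy _; rewrite subr0.
exact: (gc_self (G := init_forms J I) (p := (n, y))).
Qed.

Lemma finite_gens c : noetherian R -> ar_cond J I c ->
  exists s0 : seq (nat * R), hom_gens J Q (fun p => p \in s0).
Proof.
move=> noe Hc.
have [t Ht] : exists t : nat -> seq R, forall k, seteq (isect (ipow J k) I) (gen_by (t k)).
  apply: (functional_choice (fun k t => seteq (isect (ipow J k) I) (gen_by t))) => k.
  by apply: noe; apply: idl_isect (ipow_ideal iJ k) iI.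
pose s0 := flatten [seq [seq (k, g) | g <- t k] | k <- iota 0 c.+1].
have s0P : forall p, p \in s0 -> (p.1 <= c)%N /\ p.2 \in t p.1.
  move=> p /flattenP [l /mapP [k]]; rewrite mem_iota => /andP [_ ltk] -> /mapP [g gin ->] /=.
  by split.
have s0I : forall k g, (k <= c)%N -> g \in t k -> (k, g) \in s0.
  move=> k g le gin; apply/flattenP; exists [seq (k, g) | g <- t k]; last exact: map_f.
  by apply: (map_f (fun k => [seq (k, g) | g <- t k])); rewrite mem_iota.
have homs : forall p, p \in s0 -> isect (ipow J p.1) I p.2.
  by move=> p /s0P [_ gin]; apply/Ht; apply: gen_by_mem.
have low : forall e f, (e <= c)%N -> isect (ipow J e) I f -> gen_comp J (fun p => p \in s0) e f.
  move=> e f le /Ht; apply: (gen_by_sub (gc_ideal _ e)) => i lti.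
  have Hin := s0I _ _ le (mem_nth 0 lti).
  apply: (gc_self (G := fun p => p \in s0) (p := (e, nth 0 (t e) i))) => //.
  by have [] := homs _ Hin.
have all : forall e f, isect (ipow J e) I f -> gen_comp J (fun p => p \in s0) e f.
  move=> e f Hf; case: (leqP e c) => [le|lt]; first exact: low.
  move: Hf; move/(Hc e (ltnW lt) f).
  apply: (prod_id_sub (gc_ideal _ e)) => u v Ju Hv.
  rewrite -(subnK (ltnW lt)); apply: gc_mulJ Ju _; exact: low.
exists s0; split.
- by move=> p /homs [].
- by move=> p /homs [Jp Ip]; apply: Q_of.
- move=> n x; split.
    by apply: gc_trans => p [Ip [Jp _]]; apply: all.
  by apply: gc_trans => p /homs [Jp Ip]; apply: Q_of.
Qed.

Lemma hom_gens_ext S S' : (forall p, S p <-> S' p) -> hom_gens J Q S -> hom_gens J Q S'.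
Proof.
move=> e [h1 h2 h3]; split.
- by move=> p /e /h1.
- by move=> p /e /h2.
- move=> n x; rewrite h3; split; apply: gc_mono => p /e //.
Qed.

Lemma min_exists (s0 : seq (nat * R)) : hom_gens J Q (fun p => p \in s0) -> exists S, min_hom_gens J Q S.
Proof.
move=> H0.
pose P n := exists t : seq (nat * R), hom_gens J Q (fun p => p \in t) /\ size t = n.
have [n [[t [Ht st]] Hmin]] := ex_min (ex_intro P _ (ex_intro _ s0 (conj H0 erefl))).
exists (fun p => p \in t); split => // S' sub [p [pt nS'p]] HS'.
pose b q := sval (decide (S' q)).
have bP : forall q, b q = true <-> S' q by move=> q; exact: svalP (decide (S' q)).
pose t' := filter b t.
have HS't' : hom_gens J Q (fun p => p \in t').
  apply: hom_gens_ext HS' => q; rewrite mem_filter; split.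
    by move=> Sq; apply/andP; split; [exact/bP | exact: sub].
  by move/andP => [/bP].
have := Hmin (size t') (ex_intro _ t' (conj HS't' erefl)).
rewrite -st size_filter leqNgt => /negP; apply.
rewrite -(count_predC b t) -[X in (X < _)%N]addn0 ltn_add2l -has_count.
by apply/hasP; exists p => //=; apply/negP => /bP.
Qed.

Lemma bound c S : ar_cond J I c -> min_hom_gens J Q S -> forall p, S p -> (p.1 <= c)%N.
Proof.
move=> Hc [[homS SQ eqS] minS] p Sp; apply: NNPP => /negP; rewrite -ltnNge => lt.
pose S' q := S q /\ q <> p.
apply: (minS S'); [by move=> q [] | by exists p; split => // -[] | ].
split.
- by move=> q [/homS].
- by move=> q [/SQ].
- move=> n x; split; last first.
    by move=> H; apply/eqS; move: H; apply: gc_mono => q [].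
  move/eqS; apply: gc_trans => q Sq.
  case: (classic (q = p)) => [->|neq]; last exact: gc_self (conj Sq neq) (homS q Sq).
  have [Jp [y [Jy [Iy dy]]]] := Q_char (SQ p Sp).
  apply: gc_fix _ Jp dy.
  have : KK J I p.1 c y by apply/(Hc p.1 (ltnW lt) y).
  apply: (prod_id_sub (gc_ideal _ _)) => u v Ju [Jv Iv].
  rewrite -(subnK (ltnW lt)); apply: gc_mulJ Ju _.
  have := gc_low ((eqS c v).1 (Q_of Jv Iv)).
  apply: gc_mono => q2 [Sq2 le]; split => // eq; move: le; rewrite eq; lia.
Qed.

Lemma attain c S : noetherian R -> local_ring R -> ar_cond J I c ->
  (forall c', ar_cond J I c' -> (c <= c')%N) -> min_hom_gens J Q S ->
  c = 0%N \/ exists p, S p /\ p.1 = c.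
Proof.
move=> noe loc Hc cmin mS.
have bnd := bound Hc mS.
case: mS => [[homS SQ eqS] _].
case: (classic (exists p, S p /\ p.1 = c)) => [h|nh]; [by right|left].
case: c Hc cmin bnd nh => [//|d] Hc cmin bnd nh.
exfalso.
have lowS : forall p, S p -> (p.1 <= d)%N.
  move=> p Sp; have := bnd p Sp; rewrite leq_eqVlt => /orP [/eqP e|//].
  by exfalso; apply: nh; exists p.
suff : ar_cond J I d by move/cmin; rewrite ltnn.
move=> n len f; split; last exact: KK_sub.
move=> Mf.
case: (classic (J 1)) => [J1|nJ1].
  case: Mf => _ If; rewrite -[f]mul1r; apply: prod_id_mul; first exact: ipow_all.
  by split => //; exact: ipow_all.
have step : forall m x, (d <= m)%N -> isect (ipow J m) I x ->
    exists k, KK J I m d k /\ isect (ipow J m.+1) I (x - k).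
  move=> m x dm [Jx Ix].
  have /gcE [_ [y [cy dxy]]] := (eqS m x).1 (Q_of Jx Ix).
  have : exists k, KK J I m d k /\ ipow J m.+1 (y - k).
    move: cy; apply: (comb_sum_prop (P := fun z => exists k, KK J I m d k /\ ipow J m.+1 (z - k))).
    - exists 0; split; first exact: idl0 (KK_ideal iJ I m d).
      by rewrite subrr; exact: idl0 (ipow_ideal iJ _).
    - move=> u v [k1 [K1 d1]] [k2 [K2 d2]]; exists (k1 + k2).
      split; first exact: idlD (KK_ideal iJ I m d) _ _.
      have -> : u + v - (k1 + k2) = (u - k1) + (v - k2) by ring.
      exact: idlD (ipow_ideal iJ _) _ _.
    - move=> p a Sp le Ja.
      have [_ [h [Jh [Ih dh]]]] := Q_char (SQ p Sp).
      exists (a * h); split; first exact: (KK_gen iJ iI (lowS p Sp) dm Ja Jh Ih).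
      rewrite -mulrBr; have -> : m.+1 = ((m - p.1) + p.1.+1)%N by lia.
      exact: (ipow_mul iJ).
  move=> [k [Kk dk]]; exists k; split => //; split.
    have -> : x - k = (x - y) + (y - k) by ring.
    exact: idlD (ipow_ideal iJ _) _ _.
  by apply: idlB iI Ix _; have [] := KK_sub iJ iI dm Kk.
have iter : forall j x, isect (ipow J n) I x ->
    exists k, KK J I n d k /\ isect (ipow J (n + j)) I (x - k).
  elim=> [|j IH] x Mx.
    exists 0; rewrite addn0 subr0; split => //; exact: idl0 (KK_ideal iJ I n d).
  have [k [Kk Mk]] := IH x Mx.
  have [k' [Kk' Mk']] := step (n + j)%N (x - k) (leq_trans len (leq_addr _ _)) Mk.
  exists (k + k'); split.
    apply: idlD (KK_ideal iJ I n d) Kk _.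
    move: Kk'; apply: prod_id_mono => // z; apply: (ipow_anti iJ); lia.
  by rewrite addnS opprD addrA.
have iM : ideal (isect (ipow J n) I) := idl_isect (ipow_ideal iJ n) iI.
apply: (nakayama noe loc iJ nJ1 iM (KK_ideal iJ I n d)) Mf => x Mx.
have [k [Kk Mk]] := iter d.+2 x Mx.
exists k, (x - k); split => //; split; last by rewrite addrC subrK.
have : KK J I (n + d.+2) d.+1 (x - k) by apply/(Hc _ _ (x - k)) => //; lia.
rewrite /KK (_ : (n + d.+2 - d.+1 = n.+1)%N); last by lia.
apply: (prod_id_sub (prod_id_ideal _ iJ)) => u v /= Ju [Jv Iv].
move: Ju; apply: prod_id_rmul => w Jw; split; first exact: idlMr (ipow_ideal iJ n) Jw.
exact: idlM.
Qed.

End Main.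

Theorem proposition2p3 (R : comNzRingType) (I J : R -> Prop) :
  noetherian R -> local_ring R -> ideal I -> ideal J ->
  exists c : nat, is_ar_number J I c /\ d_is J (in_comp J I) c.
Proof.
move=> noe loc iI iJ.
have [c0 H0] := artin_rees iJ iI noe.
have [c [Hc cmin]] := ex_min (ex_intro _ c0 H0).
exists c; split; first by split.
split.
  have [s0 Hs0] := finite_gens iI iJ noe Hc.
  exact: min_exists Hs0.
move=> S mS; split; first exact: bound Hc mS.
exact: attain noe loc Hc cmin mS.
Qed.
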